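(* Let $p\ge3$ and consider the dynamic panel logit AR($p$) model with $T=4$: binary outcomes $Y_{1-p},\dots,Y_0,Y_1,\dots,Y_4\in\{0,1\}$, regressors $X=(X_1,\dots,X_4)\in\mathbb{R}^{K\times4}$, fixed effect $A\in\mathbb{R}$, with, for $t\in\{1,\dots,4\}$, $$\Pr(Y_t=1\mid Y_{1-p},\dots,Y_{t-1},X,A)=\frac{\exp(X_t'\beta_0+\sum_{\ell=1}^pY_{t-\ell}\gamma_{0,\ell}+A)}{1+\exp(X_t'\beta_0+\sum_{\ell=1}^pY_{t-\ell}\gamma_{0,\ell}+A)}$$ and true parameters $\beta_0\in\mathbb{R}^K$, $\gamma_0\in\mathbb{R}^p$. Let $Y^{(0)}=(Y_{1-p},\dots,Y_0)$, $0_p$ the $p$-vector of zeros, $x_{ts}=x_t-x_s$, and for $y=(y_1,\dots,y_4)\in\{0,1\}^4$, $x=(x_1,x_2,x_3,x_3)$, $\beta\in\mathbb{R}^K$, $\gamma\in\mathbb{R}^p$ define $$m^{(a)}=\begin{cases}e^{x_{23}'\beta}&y=(0,0,1,0),\\ e^{x_{23}'\beta-\gamma_1}&y=(0,0,1,1),\\ -1&(y_1,y_2,y_3)=(0,1,0),\\0&\text{otherwise},\end{cases}\qquad m^{(b)}=\begin{cases}e^{x_{12}'\beta}&(y_1,y_2,y_3)=(0,1,0),\\ e^{x_{12}'\beta}[1+e^{x_{23}'\beta-\gamma_1}-e^{\gamma_2}]&y=(0,1,1,0),\\ e^{x_{13}'\beta-\gamma_1-\gamma_2}&y=(0,1,1,1),\\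 -1&(y_1,y_2)=(1,0),\\ e^{x_{32}'\beta+\gamma_2}-1&(y_1,y_2,y_3)=(1,1,0),\\0&\text{otherwise},\end{cases}$$ $$m^{(c)}=\begin{cases}-e^{\gamma_1}&y=(0,0,1,0),\\ -1&y=(0,0,1,1),\\ e^{x_{32}'\beta}[e^{\gamma_1}-e^{\gamma_2}]&y=(0,1,0,0),\\ e^{\gamma_1-\gamma_2}-1&y=(0,1,0,1),\\ -1&(y_1,y_2,y_3)=(0,1,1),\\ e^{x_{31}'\beta+\gamma_2}&(y_1,y_2,y_3)=(1,0,0),\\ e^{x_{21}'\beta+\gamma_1}&(y_1,y_2,y_3)=(1,0,1),\\0&\text{otherwise}.\end{cases}$$ Then for all $(x_1,x_2,x_3)\in\mathbb{R}^{K\times3}$, $\alpha\in\mathbb{R}$ and $\xi\in\{a,b,c\}$, $$\mathbb{E}\big[m^{(\xi)}(Y,X,\beta_0,\gamma_0)\mid Y^{(0)}=0_p,X=(x_1,x_2,x_3,x_3),A=\alpha\big]=0,$$ where $Y=(Y_1,\dots,Y_4)$.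
   Context: The joint distribution of $(Y^{(0)},X,A)$ is unrestricted; only the conditional law of $(Y_1,\dots,Y_4)$ given $(Y^{(0)},X,A)$ is specified by the model. The paper defines $m^{(a)}$ as $\mathbb{1}(y_1=0)$ times the $T=3$ moment function for initial condition $0_p$ applied to $(y_2,y_3,y_4)$ and regressors $(x_2,x_3,x_3)$, and $m^{(b)}$ as the AR(2), $T=4$ moment function $m^{(d)}_{(0,0)}$ evaluated at $x=(x_1,x_2,x_3,x_3)$ and $(\gamma_1,\gamma_2)$; the displayed formulas are these functions written out explicitly (with $x_4=x_3$ substituted). *)

(* Defs.v *)
From HB Require Import structures.
From mathcomp Require Import all_boot all_order all_algebra.
From mathcomp Require Import reals sequences exp.
Set Implicit Arguments. Unset Strict Implicit. Unset Printing Implicit Defensive.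
Import Order.TTheory GRing.Theory Num.Theory.
Local Open Scope ring_scope.

Section Model.
Variable R : realType.

Definition Lambda (u : R) : R := expR u / (1 + expR u).

(* Outcomes Y_1..Y_4 are stored in y : {ffun 'I_4 -> bool}; Y y t = Y_t (t = 1..4). *)
Definition Y (y : {ffun 'I_4 -> bool}) (t : nat) : bool := y (inord t.-1).

(* Initial condition: y0 j = Y_{-j}, j = 0..p-1 (i.e. Y_0, Y_{-1}, ..., Y_{1-p}).
   lag y0 y t l = Y_{t-l}. *)
Definition lag (y0 : nat -> bool) (y : {ffun 'I_4 -> bool}) (t l : nat) : bool :=
  if (l < t)%N then Y y (t - l) else y0 (l - t)%N.

(* inner product x_t' beta; regressors X : nat -> 'I_K -> R, X t = x_t (t = 1..4) *)
Definition xb (K : nat) (X : nat -> 'I_K -> R) (beta : 'I_K -> R) (t : nat) : R :=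
  \sum_(k < K) X t k * beta k.

(* gamma : nat -> R, gamma l = gamma_l for l = 1..p (other values unused) *)
Definition lindex (K p : nat) (X : nat -> 'I_K -> R) (beta : 'I_K -> R)
  (gamma : nat -> R) (y0 : nat -> bool) (alpha : R) (y : {ffun 'I_4 -> bool}) (t : nat) : R :=
  xb X beta t + \sum_(1 <= l < p.+1) (lag y0 y t l)%:R * gamma l + alpha.

Definition prob (K p : nat) (X : nat -> 'I_K -> R) (beta : 'I_K -> R)
  (gamma : nat -> R) (y0 : nat -> bool) (alpha : R) (y : {ffun 'I_4 -> bool}) : R :=
  \prod_(i < 4)
    (let u := Lambda (lindex p X beta gamma y0 alpha y i.+1) in
     if y i then u else 1 - u).

Definition condE (K p : nat) (X : nat -> 'I_K -> R) (beta : 'I_K -> R)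
  (gamma : nat -> R) (y0 : nat -> bool) (alpha : R)
  (m : {ffun 'I_4 -> bool} -> R) : R :=
  \sum_(y : {ffun 'I_4 -> bool}) prob p X beta gamma y0 alpha y * m y.

Definition xfull (K : nat) (x : nat -> 'I_K -> R) : nat -> 'I_K -> R :=
  fun t => if t == 4%N then x 3%N else x t.

Definition xd (K : nat) (x : nat -> 'I_K -> R) (beta : 'I_K -> R) (t s : nat) : R :=
  \sum_(k < K) (x t k - x s k) * beta k.

Definition m_a (K : nat) (x : nat -> 'I_K -> R) (beta : 'I_K -> R) (gamma : nat -> R)
  (y : {ffun 'I_4 -> bool}) : R :=
  match Y y 1, Y y 2, Y y 3, Y y 4 with
  | false, false, true, false => expR (xd x beta 2 3)
  | false, false, true, true => expR (xd x beta 2 3 - gamma 1%N)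
  | false, true, false, _ => -1
  | _, _, _, _ => 0
  end.

Definition m_b (K : nat) (x : nat -> 'I_K -> R) (beta : 'I_K -> R) (gamma : nat -> R)
  (y : {ffun 'I_4 -> bool}) : R :=
  match Y y 1, Y y 2, Y y 3, Y y 4 with
  | false, true, false, _ => expR (xd x beta 1 2)
  | false, true, true, false =>
      expR (xd x beta 1 2) * (1 + expR (xd x beta 2 3 - gamma 1%N) - expR (gamma 2%N))
  | false, true, true, true => expR (xd x beta 1 3 - gamma 1%N - gamma 2%N)
  | true, false, _, _ => -1
  | true, true, false, _ => expR (xd x beta 3 2 + gamma 2%N) - 1
  | _, _, _, _ => 0
  end.

Definition m_c (K : nat) (x : nat -> 'I_K -> R) (beta : 'I_K -> R) (gamma : nat -> R)
  (y : {ffun 'I_4 -> bool}) : R :=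
  match Y y 1, Y y 2, Y y 3, Y y 4 with
  | false, false, true, false => - expR (gamma 1%N)
  | false, false, true, true => -1
  | false, true, false, false => expR (xd x beta 3 2) * (expR (gamma 1%N) - expR (gamma 2%N))
  | false, true, false, true => expR (gamma 1%N - gamma 2%N) - 1
  | false, true, true, _ => -1
  | true, false, false, _ => expR (xd x beta 3 1 + gamma 2%N)
  | true, false, true, _ => expR (xd x beta 2 1 + gamma 1%N)
  | _, _, _, _ => 0
  end.

End Model.

Inductive xi_t := Xa | Xb | Xc.

Definition m_xi (R : realType) (xi : xi_t) :=
  match xi with Xa => @m_a R | Xb => @m_b R | Xc => @m_c R end.

(* Main.v *)
Require Import Defs.
From HB Require Import structures.
From mathcomp Require Import all_boot all_order all_algebra.
From mathcomp Require Import reals sequences exp.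
From mathcomp Require Import ring lra.
Set Implicit Arguments. Unset Strict Implicit. Unset Printing Implicit Defensive.
Import Order.TTheory GRing.Theory Num.Theory.
Local Open Scope ring_scope.

Lemma sum_pair_bool (R : realType) (T : finType) (F : bool * T -> R) :
  \sum_(p : bool * T) F p = \sum_(q : T) F (true, q) + \sum_(q : T) F (false, q).
Proof.
transitivity (\sum_(p : bool * T) F (p.1, p.2)); first by apply: eq_bigr => -[].
by rewrite -(pair_bigA _ (fun b q => F (b, q))) big_bool.
Qed.

Definition mkf (b : bool * (bool * (bool * bool))) : {ffun 'I_4 -> bool} :=
  [ffun i : 'I_4 => match val i with 0 => b.1 | 1 => b.2.1 | 2 => b.2.2.1 | _ => b.2.2.2 end]%N.
Definition unf (y : {ffun 'I_4 -> bool}) : bool * (bool * (bool * bool)) :=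
  (y (inord 0), (y (inord 1), (y (inord 2), y (inord 3)))).

Lemma sum16' (R : realType) (G : {ffun 'I_4 -> bool} -> R) :
  \sum_(y : {ffun 'I_4 -> bool}) G y =
  \sum_(b1 : bool) \sum_(b2 : bool) \sum_(b3 : bool) \sum_(b4 : bool) G (mkf (b1, (b2, (b3, b4)))).
Proof.
have hv k (hk : (k < 4)%N) : \val (inord k : 'I_4) = k by exact: inordK.
have bij : {on [pred i | true], bijective mkf}.
  exists unf => [b _|y _].
    case: b => b1 [b2 [b3 b4]]; rewrite /unf /mkf !ffunE !hv //.
  apply/ffunP => i; rewrite /mkf /unf ffunE.
  case: i => [[|[|[|[|i]]]] Hi] //=; congr (y _); by apply/val_inj; rewrite /= hv.
by rewrite (reindex mkf bij) /= !sum_pair_bool !big_bool.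
Qed.

Lemma lindexE (R : realType) (K p : nat) (hp : (3 <= p)%N) X (beta : 'I_K -> R) gamma alpha y t :
  (t <= 4)%N ->
  lindex p X beta gamma (fun _ => false) alpha y t =
  xb X beta t + ((lag (fun _ => false) y t 1)%:R * gamma 1%N
    + (lag (fun _ => false) y t 2)%:R * gamma 2%N + (lag (fun _ => false) y t 3)%:R * gamma 3%N) + alpha.
Proof.
move=> ht; rewrite /lindex (big_cat_nat (n := 4)) //=.
rewrite [\sum_(4 <= i < p.+1) _]big1_seq ?addr0; last first.
  move=> l /andP[_]; rewrite mem_index_iota => /andP[hl _].
  rewrite /lag; case: ifP => [hlt|_]; last by rewrite mul0r.
  by exfalso; move: hlt; rewrite ltnNge (leq_trans ht hl).
by rewrite big_ltn // big_ltn // big_ltn // big_geq // addr0 !addrA.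
Qed.

Definition fac (R : realType) (b : bool) (u : R) := if b then Lambda u else 1 - Lambda u.

Lemma probE (R : realType) (K p : nat) (hp : (3 <= p)%N) X (beta : 'I_K -> R) gamma alpha b1 b2 b3 b4 :
  prob p X beta gamma (fun _ => false) alpha (mkf (b1, (b2, (b3, b4)))) =
  fac b1 (xb X beta 1 + alpha) *
  fac b2 (xb X beta 2 + (b1%:R * gamma 1%N) + alpha) *
  fac b3 (xb X beta 3 + (b2%:R * gamma 1%N + b1%:R * gamma 2%N) + alpha) *
  fac b4 (xb X beta 4 + (b3%:R * gamma 1%N + b2%:R * gamma 2%N + b1%:R * gamma 3%N) + alpha).
Proof.
have hv k (hk : (k < 4)%N) : \val (inord k : 'I_4) = k by exact: inordK.
rewrite /prob big_ord_recl big_ord_recl big_ord_recl big_ord_recl big_ord0 mulr1.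
rewrite !lindexE //.
rewrite /lag /Y /mkf !ffunE !hv //= /fac !mulrA.
congr (_ * _ * _ * _); congr (if _ then Lambda _ else 1 - Lambda _).
all: rewrite ?mul0r ?addr0 ?add0r //.
Qed.

Lemma condE_expand (R : realType) (K p : nat) (hp : (3 <= p)%N) X (beta : 'I_K -> R) gamma alpha m :
  condE p X beta gamma (fun _ => false) alpha m =
  \sum_(b1 : bool) \sum_(b2 : bool) \sum_(b3 : bool) \sum_(b4 : bool)
  (fac b1 (xb X beta 1 + alpha) *
  fac b2 (xb X beta 2 + (b1%:R * gamma 1%N) + alpha) *
  fac b3 (xb X beta 3 + (b2%:R * gamma 1%N + b1%:R * gamma 2%N) + alpha) *
  fac b4 (xb X beta 4 + (b3%:R * gamma 1%N + b2%:R * gamma 2%N + b1%:R * gamma 3%N) + alpha))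
  * m (mkf (b1, (b2, (b3, b4)))).
Proof.
rewrite /condE sum16'.
apply: eq_bigr => b1 _; apply: eq_bigr => b2 _; apply: eq_bigr => b3 _; apply: eq_bigr => b4 _.
by rewrite probE.
Qed.

Lemma Ymkf1 b1 b2 b3 b4 : Y (mkf (b1, (b2, (b3, b4)))) 1 = b1.
Proof.
have hv k (hk : (k < 4)%N) : \val (inord k : 'I_4) = k by exact: inordK.
by rewrite /Y /mkf ffunE hv.
Qed.
Lemma Ymkf2 b1 b2 b3 b4 : Y (mkf (b1, (b2, (b3, b4)))) 2 = b2.
Proof.
have hv k (hk : (k < 4)%N) : \val (inord k : 'I_4) = k by exact: inordK.
by rewrite /Y /mkf ffunE hv.
Qed.
Lemma Ymkf3 b1 b2 b3 b4 : Y (mkf (b1, (b2, (b3, b4)))) 3 = b3.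
Proof.
have hv k (hk : (k < 4)%N) : \val (inord k : 'I_4) = k by exact: inordK.
by rewrite /Y /mkf ffunE hv.
Qed.
Lemma Ymkf4 b1 b2 b3 b4 : Y (mkf (b1, (b2, (b3, b4)))) 4 = b4.
Proof.
have hv k (hk : (k < 4)%N) : \val (inord k : 'I_4) = k by exact: inordK.
by rewrite /Y /mkf ffunE hv.
Qed.

Lemma xdE (R : realType) K (x : nat -> 'I_K -> R) beta t s : xd x beta t s = xb x beta t - xb x beta s.
Proof. by rewrite /xd /xb -sumrB; apply: eq_bigr => k _; rewrite mulrBl. Qed.

Lemma facT (R : realType) (u : R) : fac true u = expR u / (1 + expR u).
Proof. by []. Qed.
Lemma facF (R : realType) (u : R) : fac false u = 1 / (1 + expR u).
Proof.
rewrite /fac /Lambda; have h : 1 + expR u != 0 by apply/lt0r_neq0; rewrite addr_gt0 ?expR_gt0.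
by field.
Qed.

Theorem lemma6 (R : realType) (K p : nat) (hp : (3 <= p)%N)
  (beta0 : 'I_K -> R) (gamma0 : nat -> R)
  (x : nat -> 'I_K -> R) (alpha : R) (xi : xi_t) :
  condE p (xfull x) beta0 gamma0 (fun _ => false) alpha
    (m_xi xi x beta0 gamma0) = 0.
Proof.
rewrite condE_expand // !big_bool.
have n1 : (true:nat)%:R = 1 :> R by [].
have n0 : (false:nat)%:R = 0 :> R by [].
have x1 : xb (xfull x) beta0 1 = xb x beta0 1 by [].
have x2 : xb (xfull x) beta0 2 = xb x beta0 2 by [].
have x3 : xb (xfull x) beta0 3 = xb x beta0 3 by [].
have x4 : xb (xfull x) beta0 4 = xb x beta0 3 by [].
rewrite !n1 !n0 !x1 !x2 !x3 !x4 !mul0r !mul1r !addr0 !add0r !facT !facF.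
case: xi; rewrite /m_xi ?/m_a ?/m_b ?/m_c !Ymkf1 !Ymkf2 !Ymkf3 !Ymkf4 !xdE /= ?mulr0 ?addr0 ?add0r.
all: rewrite !expRD ?expRN.
all: have := expR_gt0 (xb x beta0 1); set B1 := expR (xb x beta0 1) => hB1.
all: have := expR_gt0 (xb x beta0 2); set B2 := expR (xb x beta0 2) => hB2.
all: have := expR_gt0 (xb x beta0 3); set B3 := expR (xb x beta0 3) => hB3.
all: have := expR_gt0 (gamma0 1%N); set G1 := expR (gamma0 1%N) => hG1.
all: have := expR_gt0 (gamma0 2%N); set G2 := expR (gamma0 2%N) => hG2.
all: have := expR_gt0 (gamma0 3%N); set G3 := expR (gamma0 3%N) => hG3.
all: have := expR_gt0 alpha; set A := expR alpha => hA.
all: field. all: repeat (apply/andP; split). all: try (apply/lt0r_neq0;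
  repeat first [ assumption | apply: mulr_gt0 | apply: addr_gt0 | exact: ltr01 | apply: invr_gt0 ]).
Qed.
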